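(* For every density operator $\rho$ on $\mathbb{C}^d$, $C_{\mathcal{F}}(\rho)\le\frac1d 2^{\mu_d(\rho)}$, where $\mu_d(\rho)=D_{\max}(\rho\,\|\,\Delta(\rho))$.
   Context: Fix the computational basis $\{|i\rangle\}_{i=0}^{d-1}$ of $\mathbb{C}^d$ as the incoherent basis and $\Delta(\rho)=\sum_i|i\rangle\langle i|\rho|i\rangle\langle i|$. A maximally coherent state is a pure state $\frac1{\sqrt d}\sum_{i}e^{\mathrm{i}\theta_i}|i\rangle$; the quantum coherence fraction is $C_{\mathcal{F}}(\rho)=\max_{|\phi\rangle\text{ maximally coherent}}\langle\phi|\rho|\phi\rangle$. The max-relative entropy is $D_{\max}(\rho\|\sigma)=\min\{\gamma\in\mathbb{R}:\rho\le 2^{\gamma}\sigma\}$ (logarithm base 2), so $\mu_d(\rho)=\min\{\gamma:\rho\le2^\gamma\Delta(\rho)\}$. *)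

(* Defs.v *)
From HB Require Import structures.
From mathcomp Require Import all_boot all_order all_algebra.
From mathcomp Require Import classical_sets boolp reals exp trigo.
From mathcomp Require Import complex.
Set Implicit Arguments.
Unset Strict Implicit.
Unset Printing Implicit Defensive.
Import Order.TTheory GRing.Theory Num.Theory.
Local Open Scope ring_scope.
Local Open Scope classical_set_scope.

Notation Cx R := (complex.complex R).

Definition rC (R : realType) (x : R) : Cx R := complex.Complex x 0.

Definition adjmx (R : realType) (m n : nat) (A : 'M[Cx R]_(m, n)) : 'M[Cx R]_(n, m) :=
  map_mx Num.conj A^T.

(* Positive semidefinite: <v|A|v> >= 0 for every vector v
   (on a numClosedField, 0 <= z means z is a nonnegative real). *)
Definition psdmx (R : realType) (d : nat) (A : 'M[Cx R]_d) : Prop :=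
  forall v : 'cV[Cx R]_d, 0 <= (adjmx v *m A *m v) 0 0.

Definition loewner_le (R : realType) (d : nat) (A B : 'M[Cx R]_d) : Prop :=
  psdmx (B - A).

Definition density (R : realType) (d : nat) (rho : 'M[Cx R]_d) : Prop :=
  psdmx rho /\ \tr rho = 1.

Definition dephase (R : realType) (d : nat) (rho : 'M[Cx R]_d) : 'M[Cx R]_d :=
  diag_mx (\row_i rho i i).

Definition expi (R : realType) (t : R) : Cx R := complex.Complex (cos t) (sin t).

Definition maxcoh (R : realType) (d : nat) (theta : 'I_d -> R) : 'cV[Cx R]_d :=
  \col_i (rC (Num.sqrt (d%:R : R))^-1 * expi (theta i)).

(* Coherence fraction: max over maximally coherent |phi> of <phi|rho|phi>
   (a real number for Hermitian rho; we take the real part). *)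
Definition coh_fraction (R : realType) (d : nat) (rho : 'M[Cx R]_d) : R :=
  sup [set complex.Re ((adjmx (maxcoh theta) *m rho *m maxcoh theta) 0 0)
       | theta in [set: 'I_d -> R]].

Definition Dmax (R : realType) (d : nat) (rho sigma : 'M[Cx R]_d) : R :=
  inf [set g : R | loewner_le rho
                     (rC (powR 2 g) *: sigma)].

Definition mu_d (R : realType) (d : nat) (rho : 'M[Cx R]_d) : R :=
  Dmax rho (dephase rho).

(* Main.v *)
Require Import Defs.
From HB Require Import structures.
From mathcomp Require Import all_boot all_order all_algebra.
From mathcomp Require Import classical_sets boolp reals exp trigo.
From mathcomp Require Import complex.
From mathcomp Require Import ring.
Import Order.TTheory GRing.Theory Num.Theory.
Local Open Scope ring_scope.

Section S.
Variable R : realType.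
Variable d : nat.
Local Notation C := (Cx R).

Definition qf (A : 'M[C]_d) (x : 'cV[C]_d) : C := (adjmx x *m A *m x) 0 0.

Lemma adjmxD (x y : 'cV[C]_d) : adjmx (x + y) = adjmx x + adjmx y.
Proof. by rewrite /adjmx linearD /= map_mxD. Qed.
Lemma adjmxN (x : 'cV[C]_d) : adjmx (- x) = - adjmx x.
Proof. by rewrite /adjmx linearN /= map_mxN. Qed.

Lemma qf_par A x y : qf A (x + y) + qf A (x - y) = 2 * qf A x + 2 * qf A y.
Proof.
rewrite /qf adjmxD adjmxD adjmxN !mulmxDl !mulmxDr !mulNmx !mulmxN !mxE.
ring.
Qed.

Lemma qf_le A x y : psdmx A -> qf A (x + y) <= 2 * qf A x + 2 * qf A y.
Proof. by move=> hA; rewrite -qf_par lerDl; apply: hA. Qed.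

Lemma qf0 A : qf A 0 = 0.
Proof. by rewrite /qf mulmx0 mxE. Qed.

Lemma qf_sum A n (u : 'I_n -> 'cV[C]_d) : psdmx A ->
  qf A (\sum_(i < n) u i) <= 2 ^+ n * \sum_(i < n) qf A (u i).
Proof.
move=> hA; elim: n u => [|n IH] u.
  by rewrite !big_ord0 qf0 mulr0.
rewrite !big_ord_recl.
apply: le_trans (qf_le _ _ _ hA) _.
rewrite exprS mulrDr -mulrA; apply: lerD.
  rewrite ler_wpM2l // ler_peMl //; first exact: hA.
  by apply: exprn_ege1; rewrite ler1n.
by rewrite -mulrA ler_wpM2l // IH.
Qed.

Lemma adjmx_delta (a : C) (i : 'I_d) :
  adjmx (a *: delta_mx i (0 : 'I_1)) = a^* *: delta_mx 0 i.
Proof.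
apply/matrixP => r c; rewrite !mxE rmorphM /=; congr (_ * _).
by rewrite conjC_nat andbC.
Qed.

Lemma qf_delta A (a : C) (i : 'I_d) :
  qf A (a *: delta_mx i 0) = a^* * a * A i i.
Proof.
rewrite /qf adjmx_delta -scalemxAl -scalemxAl -scalemxAr -rowE -colE !mxE.
by rewrite mulrA.
Qed.

Lemma qf_scale c A x : qf (c *: A) x = c * qf A x.
Proof. by rewrite /qf -scalemxAr -scalemxAl mxE. Qed.

Lemma qf_sub A B x : qf (A - B) x = qf A x - qf B x.
Proof. rewrite /qf mulmxBr mulmxBl; set M := _ *m x; set N := _ *m x; by rewrite !mxE. Qed.

Lemma qf_diag A x : qf (dephase A) x = \sum_i (x i 0)^* * x i 0 * A i i.
Proof.
rewrite /qf /dephase mul_mx_diag mxE; apply: eq_bigr => i _.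
rewrite !mxE mulrAC; congr (_ * _ * _).
Qed.

Lemma col_decomp (x : 'cV[C]_d) : x = \sum_i (x i 0 *: delta_mx i 0).
Proof.
rewrite {1}[x]matrix_sum_delta; apply: eq_bigr => i _.
by rewrite big_ord1.
Qed.

Lemma dephase_bound (A : 'M[C]_d) : psdmx A ->
  loewner_le A (rC (powR 2 (d%:R : R)) *: dephase A).
Proof.
move=> hA v; rewrite -[X in 0 <= X]/(qf _ v) qf_sub qf_scale subr_ge0 powR_mulrn //.
have -> : rC (2 ^+ d : R) = 2 ^+ d :> C.
  by change (rC (2 ^+ d : R)) with ((2 ^+ d : R)%:C)%C; rewrite rmorphXn rmorph_nat.
rewrite qf_diag {1}[v]col_decomp.
have H := qf_sum A d (fun i => v i 0 *: delta_mx i 0) hA. rewrite (le_trans H) //.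
by under eq_bigr do rewrite qf_delta.
Qed.
End S.

Lemma maxcoh_norm (R : realType) (d : nat) (th : 'I_d -> R) (i : 'I_d) :
  ((maxcoh th) i 0)^* * (maxcoh th) i 0 = rC ((d%:R : R)^-1).
Proof.
rewrite mulrC -normCK mxE normrM !normc_def /= expr0n /= addr0 cos2Dsin2 sqrtr1.
rewrite sqrtr_sqr mulr1 ger0_norm ?invr_ge0 ?sqrtr_ge0 //.
rewrite -rmorphXn /= exprVn sqr_sqrtr //.
Qed.

Theorem mainTheorem6 (R : realType) (d : nat) (rho : 'M[Cx R]_d) :
  density rho ->
  coh_fraction rho <= (d%:R : R)^-1 * powR 2 (mu_d rho).
Proof.
move=> [hpsd htr].
have d_gt0 : (0 < d)%N.
  case: d rho hpsd htr => // rho _; rewrite /mxtrace big_ord0 => /eqP.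
  by rewrite eq_sym oner_eq0.
have dR : (0 < (d%:R : R)) by rewrite ltr0n.
have key : forall g, loewner_le rho (rC (powR 2 g) *: dephase rho) ->
    forall th, complex.Re ((adjmx (maxcoh th) *m rho *m maxcoh th) 0 0)
               <= powR 2 g / d%:R.
  move=> g Sg th; have := Sg (maxcoh th).
  rewrite -[X in 0 <= X]/(qf _ _ _ _) qf_sub qf_scale subr_ge0 qf_diag.
  under eq_bigr do rewrite maxcoh_norm.
  rewrite -mulr_sumr.
  have -> : \sum_i rho i i = \tr rho by [].
  rewrite htr mulr1 lecE => /andP[_ H].
  by move: H; rewrite /= ?(mulr0, mul0r, subr0).
rewrite /coh_fraction /mu_d /Dmax.
set S := [set g | _]%classic.
set T := [set _ | _ in _]%classic.
have S0 : S (d%:R) by exact: dephase_bound.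
have Tne : (T !=set0)%classic.
  by exists (complex.Re ((adjmx (maxcoh (fun _ => 0 : R)) *m rho *m maxcoh (fun _ => 0 : R)) 0 0)); exists (fun _ => 0 : R).
have ub : forall g, S g -> sup T <= powR 2 g / d%:R.
  move=> g Sg; apply: ge_sup => // x [th _ <-]; exact: key.
have [hs|hs] := leP (sup T) 0.
  apply: le_trans hs _; apply: mulr_ge0; first by rewrite invr_ge0 ltW.
  exact: powR_ge0.
set c := sup T * d%:R.
have c_gt0 : 0 < c by rewrite mulr_gt0.
have ln2 : 0 < ln (2 : R) by rewrite ln_gt0 // ltr1n.
have lb : lbound S (ln c / ln 2).
  move=> g Sg; rewrite ler_pdivrMr //.
  have : c <= powR 2 g by rewrite /c -ler_pdivlMr // ub.
  rewrite -ler_ln ?posrE ?powR_gt0 // ln_powR //.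
have hinf := lb_le_inf (ex_intro _ _ S0) lb.
have := ler_powR (ler1n R 2) hinf.
have -> : powR 2 (ln c / ln 2) = c.
  by rewrite /powR pnatr_eq0 /= divfK ?lnK // gt_eqF.
move=> hc; rewrite mulrC ler_pdivlMr //.
Qed.
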